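(* Let $Z\subseteq(\mathbb P^1)^d$ be the common vanishing locus of the multi-homogeneous polynomials $P^h$, where $P$ ranges over all linear forms $P=\sum_{\lambda\in\Phi^+}c_\lambda x_\lambda$ with $\sum_{\lambda}c_\lambda\lambda(h)=0$ for all $h\in\mathfrak h$. For a point $x=(x_\lambda)_{\lambda\in\Phi^+}\in Z$, put $\mathrm{Fin}=\{\lambda\in\Phi^+: x_\lambda\neq\infty\}$. Then $\mathrm{Fin}\cup(-\mathrm{Fin})$ is a closed root subsystem of $\Phi$.
   Context: Let $\mathfrak g$ be a complex semisimple Lie algebra, $\mathfrak h$ a Cartan subalgebra, $r=\dim\mathfrak h$, $\Phi\subset\mathfrak h^*$ its root system, $\Phi^+$ a fixed set of positive roots, $d=|\Phi^+|$. Points of $(\mathbb P^1)^d$ are written $x=(x_\lambda)_{\lambda\in\Phi^+}$ with $x_\lambda=[x_{\lambda,0}:x_{\lambda,1}]$; $\mathbb C$ is identified with $\{x_0\neq 0\}\subset\mathbb P^1$ via $c\mapsto [1:c]$, and $\infty=[0:1]$. For a linear form $P=\sum_\lambda c_\lambda x_\lambda$ with support $\mathrm{supp}(P)=\{\lambda:c_\lambda\neq0\}$, its multi-homogenization is $P^h=\sum_{\lambda\in\mathrm{supp}P}c_\lambda x_{\lambda,1}\prod_{\mu\in\mathrm{supp}P,\mu\neq\lambda}x_{\mu,0}$. A root subsystem $\Psi\subseteq\Phi$ is closed if $\lambda,\mu\in\Psi$ and $\lambda+\mu\in\Phi$ imply $\lambda+\mu\in\Psi$. *)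

(* Defs.v *)
From HB Require Import structures.
From mathcomp Require Import all_boot all_order all_algebra.
Set Implicit Arguments. Unset Strict Implicit. Unset Printing Implicit Defensive.
Import Order.TTheory GRing.Theory Num.Theory.
Local Open Scope ring_scope.

Section RootSystems.
Variables (C : numClosedFieldType) (r : nat).
Local Notation V := 'rV[C]_r.

Definition pairing (b : V) (c : 'cV[C]_r) : C := (b *m c) 0 0.

Definition is_coroot (Phi : seq V) (a : V) (c : 'cV[C]_r) : Prop :=
  pairing a c = 2 /\ forall b, b \in Phi -> b - pairing b c *: a \in Phi.

(* Reduced (crystallographic) root system in h^* = C^r (Bourbaki's
   definition over a field of characteristic 0); these are exactly the
   root systems of complex semisimple Lie algebras of rank r. *)
Definition is_root_system (Phi : seq V) : Prop :=
  [/\ (0 : V) \notin Phi,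
      (<<Phi>>%VS = fullv),
      (forall a, a \in Phi -> exists c, is_coroot Phi a c /\
          forall b, b \in Phi -> exists z : int, pairing b c = z%:~R)
    & (forall a (k : C), a \in Phi -> k *: a \in Phi -> k = 1 \/ k = -1)].

Definition nat_comb (Delta : seq V) (n : 'I_(size Delta) -> nat) : V :=
  \sum_(i < size Delta) (n i)%:R *: Delta`_i.

Definition is_positive_system (Phi Phip : seq V) : Prop :=
  exists Delta : seq V,
    [/\ {subset Delta <= Phi}, free Delta,
        (forall b, b \in Phi -> exists n,
            b = @nat_comb Delta n \/ b = - @nat_comb Delta n)
      & (forall b, b \in Phip <-> (b \in Phi /\ exists n, b = @nat_comb Delta n))].

(* Points of (P^1)^d: x l = (x_{l,0}, x_{l,1}) homogeneous coordinates,
   [1:c] = c in C, [0:1] = infinity. *)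
Definition is_P1_point (Phip : seq V) (x : V -> C * C) : Prop :=
  forall l, l \in Phip -> x l != (0, 0).

(* linear forms P = sum_l c_l x_l with sum_l c_l l = 0 in h^* *)
Definition is_relation (Phip : seq V) (c : V -> C) : Prop :=
  \sum_(l <- Phip) c l *: l = 0.

(* multi-homogenization P^h evaluated at x *)
Definition homog_eval (Phip : seq V) (c : V -> C) (x : V -> C * C) : C :=
  \sum_(l <- Phip | c l != 0)
     c l * (x l).2 * \prod_(m <- Phip | (c m != 0) && (m != l)) (x m).1.

Definition in_Z (Phip : seq V) (x : V -> C * C) : Prop :=
  is_P1_point Phip x /\
  forall c, is_relation Phip c -> homog_eval Phip c x = 0.

Definition Fin (Phip : seq V) (x : V -> C * C) : seq V :=
  [seq l <- Phip | (x l).1 != 0].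

Definition closed_subset (Phi Psi : seq V) : Prop :=
  forall a b, a \in Psi -> b \in Psi -> a + b \in Phi -> a + b \in Psi.

Definition root_subsystem (Phi Psi : seq V) : Prop :=
  {subset Psi <= Phi} /\
  forall a c, a \in Psi -> is_coroot Phi a c ->
    forall b, b \in Psi -> b - pairing b c *: a \in Psi.

Definition closed_root_subsystem (Phi Psi : seq V) : Prop :=
  root_subsystem Phi Psi /\ closed_subset Phi Psi.

End RootSystems.

(* Main.v *)
Require Import Defs.
From HB Require Import structures.
From mathcomp Require Import all_boot all_order all_algebra.
Import Order.TTheory GRing.Theory Num.Theory.
Local Open Scope ring_scope.

Definition inspan {C : numClosedFieldType} {r : nat} (F : seq 'rV[C]_r) (v : 'rV[C]_r) :=
  exists f : 'rV[C]_r -> C, v = \sum_(l <- F) f l *: l.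

Lemma inspan_add (C : numClosedFieldType) r (F : seq 'rV[C]_r) u v : inspan F u -> inspan F v -> inspan F (u + v).
Proof.
move=> [f ->] [g ->]; exists (fun l => f l + g l).
by rewrite -big_split /=; apply: eq_bigr => l _; rewrite scalerDl.
Qed.

Lemma inspan_scale (C : numClosedFieldType) r (F : seq 'rV[C]_r) k u : inspan F u -> inspan F (k *: u).
Proof.
move=> [f ->]; exists (fun l => k * f l).
by rewrite scaler_sumr; apply: eq_bigr => l _; rewrite scalerA.
Qed.

Lemma inspan_opp (C : numClosedFieldType) r (F : seq 'rV[C]_r) u : inspan F u -> inspan F (- u).
Proof. by move=> h; rewrite -scaleN1r; apply: inspan_scale. Qed.

Lemma inspan_mem (C : numClosedFieldType) r (F : seq 'rV[C]_r) u : uniq F -> u \in F -> inspan F u.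
Proof.
move=> uF uin; exists (fun l => (l == u)%:R).
rewrite (bigD1_seq u) //= eqxx scale1r big1 ?addr0 // => l /negPf ->.
by rewrite scale0r.
Qed.

Lemma key (C : numClosedFieldType) r (Phip : seq 'rV[C]_r) (x : 'rV[C]_r -> C * C) lam :
  uniq Phip -> in_Z Phip x -> lam \in Phip -> inspan (Fin Phip x) lam ->
  (x lam).1 != 0.
Proof.
move=> uP [hP hZ] lamP [f hf]; apply/negP => /eqP x0.
pose c l := if (x l).1 != 0 then - f l else if l == lam then 1 else 0.
have rel : is_relation Phip c.
  rewrite /is_relation (bigID (fun l => (x l).1 != 0)) /=.
  have -> : \sum_(i <- Phip | (x i).1 != 0) c i *: i = - lam.
    rewrite hf /Fin big_filter -sumrN; apply: eq_bigr => l xl; rewrite /c xl.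
    by rewrite scaleNr.
  rewrite (eq_bigr (fun l => (l == lam)%:R *: l)); last first.
    by move=> l /negPf; rewrite /c => ->; case: (l == lam); rewrite ?scale1r.
  rewrite -big_filter (bigD1_seq lam) /=; last 2 first.
  - by rewrite mem_filter x0 eqxx.
  - exact: filter_uniq.
  rewrite eqxx scale1r big1 ?addr0 ?addNr // => l /negPf ->.
  by rewrite scale0r.
have := hZ c rel; rewrite /homog_eval big_mkcond (bigD1_seq lam) //=.
have clam : c lam = 1 by rewrite /c x0 eqxx eqxx.
rewrite clam oner_eq0 /= [X in _ + X = _]big1 ?addr0; last first.
  move=> l lnl; case: ifP => // cl.
  have xl : (x l).1 != 0.
    by move: cl; rewrite /c; case: ifP => //; rewrite (negPf lnl) eqxx.
  apply/eqP; rewrite mulf_eq0; apply/orP; right.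
  rewrite prodf_seq_eq0; apply/hasP; exists lam => //.
  by rewrite clam oner_eq0 eq_sym lnl x0 eqxx.
apply/eqP; rewrite mul1r mulf_neq0 //.
  move: (hP lam lamP); case: (x lam) x0 => a b /= -> .
  by apply: contra => /eqP ->.
rewrite prodf_seq_neq0; apply/allP => m _; apply/implyP => /andP [cm mnl].
by move: cm; rewrite /c; case: ifP => //; rewrite (negPf mnl) eqxx.
Qed.

Theorem mainTheorem2 (C : numClosedFieldType) (r : nat)
    (Phi Phip : seq 'rV[C]_r) (x : 'rV[C]_r -> C * C) :
  is_root_system Phi -> is_positive_system Phi Phip -> uniq Phip ->
  in_Z Phip x ->
  closed_root_subsystem Phi (Fin Phip x ++ map -%R (Fin Phip x)).
Proof.
move=> [_ _ hcor _] [Delta [_ _ hdec hiff]] uP hZ.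
have negP a : a \in Phi -> - a \in Phi.
  move=> aP; have [c [[c2 hc] _]] := hcor a aP.
  have := hc a aP; rewrite c2 scaler_nat mulr2n opprD addrA subrr add0r //.
have PpP b : b \in Phip -> b \in Phi by move=> /hiff [].
set Fn := Fin Phip x.
have uF : uniq Fn by apply: filter_uniq.
have memF b : (b \in Fn) = ((x b).1 != 0) && (b \in Phip) by rewrite mem_filter.
have memPsi b : b \in Fn ++ map -%R Fn <-> b \in Phi /\ inspan Fn b.
  rewrite mem_cat; split.
    case/orP => [bF | /mapP [a aF ->]].
      by split; [apply: PpP; move: bF; rewrite memF => /andP [] | exact: inspan_mem].
    split; last by apply: inspan_opp; apply: inspan_mem.
    by apply: negP; apply: PpP; move: aF; rewrite memF => /andP [].
  move=> [bP sb]; have [n [e|e]] := hdec b bP.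
    have bPp : b \in Phip by apply/hiff; split => //; exists n.
    by rewrite memF (@key _ _ _ _ _ uP hZ bPp sb) bPp.
  have nbP : - b \in Phip by apply/hiff; split; [apply: negP | exists n; rewrite e opprK].
  have nbF : - b \in Fn by rewrite memF (@key _ _ _ _ _ uP hZ nbP (@inspan_opp _ _ _ _ sb)) nbP.
  by apply/orP; right; apply/mapP; exists (- b); rewrite ?opprK.
split; last first.
  move=> a b /memPsi [_ sa] /memPsi [_ sb] abP; apply/memPsi; split => //.
  exact: inspan_add.
split; first by move=> b /memPsi [].
move=> a c /memPsi [_ sa] [_ hc] b /memPsi [bP sb]; apply/memPsi; split.
  exact: hc.
by apply: inspan_add => //; apply: inspan_opp; apply: inspan_scale.
Qed.
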